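(* Let $A=(a_{ij})_{0\le i,j\le n}$ be a square integer matrix with nonnegative entries such that $F_A=\sum_{i=0}^n\prod_{j=0}^n x_j^{a_{ij}}$ is an invertible polynomial, and let $p$ be a prime with $\det A \mid (p-1)$. Let \[\Xi=\{(A^T)^{-1}\vec v \;:\; \vec v=(v_0,\dots,v_n)\in\mathbb{Z}^{n+1},\ v_0,\dots,v_n\ge 1\}\subset\mathbb{Q}^{n+1}.\] For $\vec\xi=(\xi_0,\dots,\xi_n)\in\Xi$ put $\mathrm{age}(\vec\xi)=\sum_{i=0}^n\xi_i$ and, when all $\xi_i\ge 0$ (so that each $(p-1)\xi_i$ is a nonnegative integer), \[\nu(\vec\xi)=\frac{(p-1)!}{\prod_{i=0}^n\big((p-1)\xi_i\big)!}.\] Let $\nu(A)$ denote the number of points $\vec x\in\mathbb{F}_p^{n+1}$ with $F_A(\vec x)=0$. Then \[\nu(A)\equiv(-1)^n\sum_{\substack{\vec\xi\in\Xi,\ \mathrm{age}(\vec\xi)=1\\ \xi_i\ge 0\ \forall i}}\nu(\vec\xi)\pmod p.\] *)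

(* Defs.v *)
From mathcomp Require Import all_boot all_order all_algebra all_field.
From mathcomp Require Import mpoly.
From mathcomp Require Import boolp classical_sets fsbigop.
Set Implicit Arguments. Unset Strict Implicit. Unset Printing Implicit Defensive.
Import Order.TTheory GRing.Theory Num.Theory.
Local Open Scope ring_scope.

(* The Berglund--Huebsch polynomial F_A = \sum_i \prod_j x_j^(a_ij),
   with coefficients in an arbitrary ring R (entries of A are assumed >= 0;
   the exponent used is |a_ij|). *)
Definition FA (R : nzRingType) (n : nat) (A : 'M[int]_n.+1) : {mpoly R[n.+1]} :=
  \sum_(i < n.+1) 'X_[ [multinom (`|A i j|%N) | j < n.+1] ].

Definition critical_point (m : nat) (P : {mpoly algC[m]}) (x : 'I_m -> algC) :=
  forall k : 'I_m, (mderiv k P).@[x] = 0.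

Definition isolated_singularity_at_0 (m : nat) (P : {mpoly algC[m]}) :=
  critical_point P (fun _ => 0) /\
  exists eps : algC, 0 < eps /\
    forall x : 'I_m -> algC, (forall j, `|x j| < eps) ->
      critical_point P x -> forall j, x j = 0.

Definition invertible_poly (n : nat) (A : 'M[int]_n.+1) :=
  \det A != 0 /\ isolated_singularity_at_0 (FA algC A).

Definition Xi (n : nat) (A : 'M[int]_n.+1) : set 'cV[rat]_n.+1 :=
  [set xi | exists v : 'cV[int]_n.+1, (forall i, 0 < v i 0) /\
       xi = invmx ((map_mx intr A)^T) *m map_mx intr v].

Definition age (n : nat) (xi : 'cV[rat]_n.+1) : rat := \sum_(i < n.+1) xi i 0.

(* nu(xi) = (p-1)! / prod_i ((p-1) xi_i)!  (used when all xi_i >= 0 and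
   (p-1) xi_i are integers; Num.trunc then returns that nonnegative integer). *)
Definition nu_xi (p n : nat) (xi : 'cV[rat]_n.+1) : rat :=
  ((p.-1)`!)%:R / (\prod_(i < n.+1) ((Num.trunc ((p.-1)%:R * xi i 0))`!)%:R).

Definition nu_A (p n : nat) (A : 'M[int]_n.+1) : nat :=
  #|[set x : 'cV['F_p]_n.+1 | (FA 'F_p A).@[fun j => x j 0] == 0]|.

(* Main.v *)
Require Import Defs.
From mathcomp Require Import all_boot all_order all_algebra all_field.
From mathcomp Require Import mpoly.
From mathcomp Require Import boolp classical_sets fsbigop.
Import Order.TTheory GRing.Theory Num.Theory.
Local Open Scope ring_scope.
From mathcomp Require Import zify functions.
Set Implicit Arguments. Unset Strict Implicit. Unset Printing Implicit Defensive.
Lemma Fp_fermat (p : nat) (pP : prime p) (c : 'F_p) : c != 0 -> c ^+ p.-1 = 1.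
Proof.
move=> cnz; have := expf_card c; rewrite card_Fp //.
have h : p = p.-1.+1 by rewrite prednK ?prime_gt0.
rewrite [X in c ^+ X = c]h exprS.
by move=> h2; apply: (mulfI cnz); rewrite mulr1.
Qed.

Lemma Fp_sum_pow (p : nat) (pP : prime p) (e : nat) :
  \sum_(c : 'F_p) c ^+ e = if (0 < e)%N && (p.-1 %| e)%N then -1 else 0.
Proof.
have p1 : (0 < p.-1)%N by rewrite -ltnS prednK ?prime_gt1 ?prime_gt0.
case: e => [|e] /=.
  by under eq_bigr do rewrite expr0; rewrite sumr_const card_Fp // pchar_Fp_0.
case: ifP => hd.
  rewrite (bigD1 0) //= expr0n /= add0r.
  rewrite (eq_bigr (fun _ => 1)); last first.
    move=> c cnz; case/dvdnP: hd => q ->.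
    by rewrite mulnC exprM Fp_fermat // expr1n.
  rewrite sumr_const cardC1 card_Fp //.
  apply/eqP; rewrite -subr_eq0 opprK natr1 prednK ?prime_gt0 // pchar_Fp_0 //.
set r := (e.+1 %% p.-1)%N.
have r0 : (0 < r)%N.
  have hd2 : ~~ (p.-1 %| e.+1)%N by apply/negP => h; move: hd; rewrite h.
  by rewrite lt0n.
have rlt : (r < p.-1)%N by rewrite ltn_mod.
have -> : \sum_(c : 'F_p) c ^+ e.+1 = \sum_(c : 'F_p) c ^+ r.
  apply: eq_bigr => c _; have [->|cnz] := eqVneq c 0.
    by rewrite !expr0n /= eqn0Ngt r0.
  rewrite {1}(divn_eq e.+1 p.-1) exprD mulnC exprM Fp_fermat // expr1n mul1r //.
have [g gnz gr] : exists2 g : 'F_p, g != 0 & g ^+ r != 1.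
  case: (pickP [pred g : 'F_p | (g != 0) && (g ^+ r != 1)]) => [g /andP[]|hall].
    by exists g.
  exfalso.
  have : (#|[pred c : 'F_p | c != 0%R]| < r.+1)%N.
    rewrite cardE -(size_XnsubC (1 : 'F_p) r0); apply: max_poly_roots.
    - by rewrite -size_poly_eq0 size_XnsubC.
    - apply/allP => c; rewrite mem_enum => cnz; rewrite inE in cnz.
      rewrite rootE !hornerE subr_eq0; have := hall c; rewrite /= cnz /=.
      by move/negbFE.
    - exact: enum_uniq.
  by rewrite cardC1 card_Fp // ltnS leqNgt rlt.
set S := \sum_(c : 'F_p) c ^+ r.
have : S = g ^+ r * S.
  rewrite {1}/S (reindex_inj (mulfI gnz)) /=.
  by under eq_bigr do rewrite exprMn; rewrite -mulr_sumr.
move/eqP; rewrite -subr_eq0 -{1}[S]mul1r -mulrBl mulf_eq0 subr_eq0 eq_sym (negbTE gr) /=.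
by move/eqP.
Qed.
Definition cnt (I : finType) m (f : {ffun 'I_m -> I}) (i : I) : nat :=
  \sum_(t < m) (f t == i).
Definition Cnt (I : finType) m (k : I -> nat) : nat :=
  #|[pred f : {ffun 'I_m -> I} | [forall i, cnt f i == k i]]|.

Definition consf (I : finType) m (i : I) (g : {ffun 'I_m -> I}) : {ffun 'I_m.+1 -> I} :=
  [ffun t => if unlift ord0 t is Some t' then g t' else i].

Lemma cnt_consf (I : finType) m i (g : {ffun 'I_m -> I}) j :
  cnt (consf i g) j = ((i == j) + cnt g j)%N.
Proof.
rewrite /cnt big_ord_recl /consf ffunE unlift_none; congr (_ + _)%N.
by apply: eq_bigr => t _; rewrite ffunE liftK.
Qed.

Lemma Cnt_rec (I : finType) m (k : I -> nat) :
  Cnt m.+1 k = (\sum_(i : I | (0 < k i)%N) Cnt m (fun j => k j - (i == j)))%N.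
Proof.
rewrite /Cnt -sum1_card.
rewrite (reindex (fun ig : I * {ffun 'I_m -> I} => consf ig.1 ig.2)) /=; last first.
  exists (fun f : {ffun 'I_m.+1 -> I} => (f ord0, [ffun t => f (lift ord0 t)])).
    move=> [i g] _ /=; rewrite /consf ffunE unlift_none; congr (_, _).
    by apply/ffunP => t; rewrite !ffunE liftK.
  move=> f _ /=; apply/ffunP => t; rewrite /consf ffunE.
  by case: unliftP => [t' ->|->]; rewrite ?ffunE.
rewrite -(pair_big_dep xpredT (fun i g => [forall j, cnt (consf i g) j == k j]) (fun _ _ => 1%N)) /=.
rewrite [RHS]big_mkcond /=; apply: eq_bigr => i _.
rewrite -sum1_card; case: ifP => ki.
  apply: eq_bigl => g; rewrite !inE; apply/forallP/forallP => h j.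
    have := h j; rewrite cnt_consf => /eqP <-; apply/eqP; lia.
  have := h j; rewrite cnt_consf => /eqP ->; apply/eqP.
  by case: eqP => [<-|_]; lia.
apply: big_pred0 => g; apply/negP => /forallP /(_ i) /eqP.
by rewrite cnt_consf eqxx; lia.
Qed.

Lemma Cnt_fact (I : finType) m (k : I -> nat) :
  (\sum_i k i)%N = m -> (Cnt m k * \prod_i (k i)`!)%N = m`!.
Proof.
elim: m k => [|m IH] k hk.
  have k0 i : k i = 0%N.
    by apply/eqP; move/eqP: hk; rewrite sum_nat_eq0 => /forallP /(_ i).
  rewrite big1 ?muln1; last by move=> i _; rewrite k0.
  rewrite /Cnt (eq_card (B := predT)) ?card_ffun ?card_ord ?expn0 // => f.
  by rewrite !inE; apply/forallP => i; rewrite /cnt big_ord0 k0.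
rewrite Cnt_rec big_distrl /=.
rewrite (eq_bigr (fun i => k i * m`!)%N); last first.
  move=> i ki; rewrite -(IH (fun j => k j - (i == j))%N); last first.
    rewrite (bigD1 i) //= in hk; rewrite (bigD1 i) //= eqxx.
    have e1 : (\sum_(j | j != i) (k j - (i == j)) = \sum_(j | j != i) k j)%N.
      by apply: eq_bigr => j ji; rewrite eq_sym (negbTE ji) subn0.
    rewrite e1 /=; lia.
  rewrite [X in _ = (_ * (_ * X))%N](bigD1 i) // [X in (_ * X)%N = _](bigD1 i) //= eqxx.
  have e1 : (\prod_(j | j != i) (k j - (i == j))`! = \prod_(j | j != i) (k j)`!)%N.
    by apply: eq_bigr => j ji; rewrite eq_sym (negbTE ji) subn0.
  rewrite e1 -(prednK ki) factS subn1 /=; lia.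
rewrite -big_distrl /= factS -hk; congr (_ * _)%N.
rewrite [RHS](bigID (fun i => 0 < k i)%N) /= [X in (_ + X)%N]big1 ?addn0 //.
by move=> i; rewrite -leqNgt leqn0 => /eqP.
Qed.
Lemma FA_eval (R : comNzRingType) n (A : 'M[int]_n.+1) (v : 'I_n.+1 -> R) :
  (FA R A).@[v] = \sum_(i < n.+1) \prod_(j < n.+1) v j ^+ `|A i j|%N.
Proof.
rewrite /FA raddf_sum; apply: eq_bigr => i _.
by apply: (etrans (mevalX _ _)); apply: eq_bigr => j _; rewrite mnmE.
Qed.

Definition ee n (A : 'M[int]_n.+1) (k : 'I_n.+1 -> nat) (j : 'I_n.+1) : nat :=
  \sum_(i < n.+1) k i * `|A i j|%N.
Definition goodb p n (A : 'M[int]_n.+1) (k : 'I_n.+1 -> nat) : bool :=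
  [forall j, (0 < ee A k j)%N && (p.-1 %| ee A k j)%N].

Lemma prod_cnt (R : comNzRingType) m n (A : 'M[int]_n.+1) (f : {ffun 'I_m -> 'I_n.+1})
   (y : 'I_n.+1 -> R) :
  \prod_(t < m) \prod_(j < n.+1) y j ^+ `|A (f t) j|%N =
  \prod_(j < n.+1) y j ^+ ee A (cnt f) j.
Proof.
rewrite exchange_big; apply: eq_bigr => j _; rewrite -expr_sum; congr (_ ^+ _).
rewrite /ee /cnt.
under [RHS]eq_bigr do rewrite big_distrl /=.
rewrite exchange_big /=; apply: eq_bigr => t _.
rewrite (bigD1 (f t)) //= eqxx mul1n big1 ?addn0 // => i.
by rewrite eq_sym => /negbTE ->.
Qed.

Lemma Fp_count p n (A : 'M[int]_n.+1) : prime p ->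
  (nu_A p A)%:R = (-1) ^+ n *
     (#|[pred f : {ffun 'I_p.-1 -> 'I_n.+1} | goodb p A (cnt f)]|)%:R :> 'F_p.
Proof.
move=> pP.
have p1 : (0 < p.-1)%N by rewrite -ltnS prednK ?prime_gt1 ?prime_gt0.
rewrite /nu_A -sumr_const big_mkcond /=.
rewrite (reindex (fun y : {ffun 'I_n.+1 -> 'F_p} => \col_j y j)) /=; last first.
  exists (fun x : 'cV['F_p]_n.+1 => [ffun j => x j 0]).
    by move=> y _; apply/ffunP => j; rewrite ffunE mxE.
  by move=> x _; apply/matrixP => i j; rewrite mxE ffunE (ord1 j).
under eq_bigr => y _.
  rewrite inE FA_eval.
  under eq_bigr do under eq_bigr do rewrite mxE.
  have -> : (if (\sum_(i < n.+1) \prod_(j < n.+1) y j ^+ `|A i j|%N == 0) then 1 else 0 : 'F_p) =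
      1 - (\sum_(i < n.+1) \prod_(j < n.+1) y j ^+ `|A i j|%N) ^+ p.-1.
    case: eqP => [->|/eqP nz]; first by rewrite expr0n eqn0Ngt p1 subr0.
    by rewrite Fp_fermat // subrr.
  rewrite -[X in _ ^+ X]card_ord -prodr_const bigA_distr_bigA /=.
  over.
rewrite sumrB sumr_const card_ffun card_Fp // card_ord natrX pchar_Fp_0 // expr0n /= sub0r.
rewrite exchange_big /=.
under eq_bigr => f _.
  under eq_bigr do rewrite prod_cnt.
  rewrite -(bigA_distr_bigA (fun j (c : 'F_p) => c ^+ ee A (cnt f) j)) /=.
  under eq_bigr do rewrite Fp_sum_pow //.
  have -> : \prod_(j < n.+1) (if (0 < ee A (cnt f) j)%N && (p.-1 %| ee A (cnt f) j)%N then -1 else 0 : 'F_p)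
     = if goodb p A (cnt f) then (-1) ^+ n.+1 else 0.
    rewrite /goodb; case: forallP => h.
      by rewrite (eq_bigr (fun _ => -1)) ?prodr_const ?card_ord // => j _; rewrite h.
    apply/eqP; rewrite prodf_seq_eq0; apply/hasP.
    have [j hj] : exists j, ~~ ((0 < ee A (cnt f) j)%N && (p.-1 %| ee A (cnt f) j)%N).
      by apply/existsP; rewrite -negb_forall; apply/forallP.
    by exists j; rewrite ?mem_index_enum //= (negbTE hj).
  over.
rewrite -big_mkcond sumr_const exprS mulN1r mulNrn opprK mulr_natr.
by [].
Qed.
Definition hk p n (k : 'I_n.+1 -> nat) : 'cV[rat]_n.+1 :=
  \col_i ((k i)%:R / (p.-1)%:R).

Lemma M_hk n (A : 'M[int]_n.+1) (hA : forall i j, 0 <= A i j) p (k : 'I_n.+1 -> nat) :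
  (map_mx intr A)^T *m hk p k = \col_j ((ee A k j)%:R / (p.-1)%:R).
Proof.
apply/matrixP => j z; rewrite (ord1 z) !mxE /ee natr_sum mulr_suml.
apply: eq_bigr => i _; rewrite !mxE natrM mulrA; congr (_ * _).
rewrite mulrC; congr (_ * _).
by rewrite -[in LHS](gez0_abs (hA i j)).
Qed.

Lemma unit_M n (A : 'M[int]_n.+1) : \det A != 0 -> ((map_mx intr A)^T : 'M[rat]_n.+1) \in unitmx.
Proof.
move=> dA; rewrite unitmxE det_tr det_map_mx unitfE intr_eq0 //.
Qed.

Lemma Xi_set n (A : 'M[int]_n.+1) p (hA : forall i j, 0 <= A i j)
   (dA : \det A != 0) (pP : prime p) (hd : (\det A %| (p.-1)%:Z)%Z) :
  ([set xi | Xi A xi /\ age xi = 1 /\ forall i, 0 <= xi i 0] =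
  (fun k : {ffun 'I_n.+1 -> 'I_p.-1.+1} => hk p (fun i => k i)) @`
    [set` [pred k : {ffun 'I_n.+1 -> 'I_p.-1.+1} |
            ((\sum_i (k i : nat)) == p.-1)%N && goodb p A (fun i => k i)]])%classic.
Proof.
have p1 : (0 < p.-1)%N by rewrite -ltnS prednK ?prime_gt1 ?prime_gt0.
have m0 : (p.-1)%:R != 0 :> rat by rewrite pnatr_eq0 -lt0n.
apply/seteqP; split; last first.
  move=> _ [k /= kK <-]; rewrite inE in kK; case/andP: kK => /eqP hs /forallP hg.
  split; [|split].
  - exists (\col_j ((ee A (fun i => k i) j %/ p.-1)%:Z)); split.
      move=> j; rewrite mxE ltz_nat divn_gt0 //.
      by case/andP: (hg j) => h1 h2; apply: dvdn_leq.
    rewrite -[LHS](mulKmx (unit_M dA) (hk p (fun i => k i))) M_hk //; congr (_ *m _).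
    apply/matrixP => j z; rewrite !mxE.
    case/andP: (hg j) => h1 h2.
    rewrite -{1}(divnK h2) natrM mulfK //.
  - rewrite /age; under eq_bigr do rewrite mxE.
    by rewrite -mulr_suml -natr_sum hs divff.
  - by move=> i; rewrite mxE divr_ge0.
move=> xi [[v [vpos hxi]] [hage hnn]].
have uM := unit_M dA.
have [q hq] : exists q : int, (p.-1)%:Z = q * \det A by apply/dvdzP.
set w := \adj (A^T) *m v.
have hxi2 : xi = ((\det A)%:~R)^-1 *: map_mx intr w.
  rewrite hxi /invmx uM det_tr det_map_mx map_trmx map_mxM map_mx_adj.
  by rewrite -scalemxAl.
have hki i : (p.-1)%:R * xi i 0 = (q * w i 0)%:~R.
  rewrite hxi2 !mxE -[(p.-1)%:R]/((p.-1)%:Z)%:~R hq !rmorphM /=.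
  rewrite mulrA mulfK // intr_eq0 //.
pose kk (i : 'I_n.+1) := `|(q * w i 0)%R|%N.
have kkE i : xi i 0 = (kk i)%:R / (p.-1)%:R.
  have h0 : 0 <= q * w i 0.
    rewrite -(ler0z rat) -hki; apply: mulr_ge0 => //; exact: hnn.
  rewrite /kk -[((`|_|%N)%:R)]/((Posz `|(q * w i 0)%R|%N)%:~R) gez0_abs // -hki.
  by rewrite [_ * xi i 0]mulrC mulfK.
have sumk : (\sum_i kk i)%N = p.-1.
  apply/eqP; rewrite -(eqr_nat rat) natr_sum; apply/eqP.
  apply: (mulIf (invr_neq0 m0)); rewrite divff // -[RHS]hage /age mulr_suml.
  by apply: eq_bigr => i _; rewrite kkE.
have kkle i : (kk i <= p.-1)%N by rewrite -sumk (bigD1 i) //= leq_addr.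
have kkv i : kk i = (inord (kk i) : 'I_p.-1.+1) :> nat by rewrite inordK // ltnS.
have hxk : xi = hk p kk by apply/matrixP => i z; rewrite (ord1 z) mxE kkE.
exists [ffun i => inord (kk i)].
  rewrite /= inE; apply/andP; split.
    by rewrite (eq_bigr kk) ?sumk // => i _; rewrite ffunE -kkv.
  have hM : (map_mx intr A)^T *m hk p kk = map_mx intr v.
    by rewrite -hxk hxi mulKVmx.
  rewrite M_hk // in hM.
  apply/forallP => j.
  have eek : ee A (fun i => [ffun i => (inord (kk i) : 'I_p.-1.+1)] i) j = ee A kk j.
    by apply: eq_bigr => i _; rewrite ffunE -kkv.
  move/matrixP: (hM) => /(_ j 0); rewrite !mxE => e1.
  have vv : v j 0 = (`|(v j 0)%R|%N)%:Z by rewrite gtz0_abs.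
  have e2 : ee A kk j = (p.-1 * `|(v j 0)%R|%N)%N.
    apply/eqP; rewrite -(eqr_nat rat) natrM.
    have -> : (`|(v j 0)%R|%N)%:R = (v j 0)%:~R :> rat by rewrite [in RHS]vv.
    by rewrite -e1 mulrC mulfVK.
  rewrite eek e2 muln_gt0 p1 absz_gt0 /= dvdn_mulr // andbT.
  by rewrite gt_eqF.
apply/matrixP => i z; rewrite (ord1 z) hxk !mxE ffunE -kkv //.
Qed.

Lemma goodb_ext p n (A : 'M[int]_n.+1) (k1 k2 : 'I_n.+1 -> nat) :
  k1 =1 k2 -> goodb p A k1 = goodb p A k2.
Proof.
move=> e; rewrite /goodb; apply: eq_forallb => j.
by rewrite /ee (eq_bigr (fun i => k2 i * `|A i j|)%N) // => i _; rewrite e.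
Qed.

Lemma cnt_le (I : finType) m (f : {ffun 'I_m -> I}) i : (cnt f i <= m)%N.
Proof.
rewrite /cnt -[X in (_ <= X)%N]card_ord -sum1_card.
by apply: leq_sum => t _; case: eqP.
Qed.

Lemma cnt_sum (I : finType) m (f : {ffun 'I_m -> I}) : (\sum_i cnt f i)%N = m.
Proof.
rewrite /cnt exchange_big /= -[RHS]card_ord -sum1_card; apply: eq_bigr => t _.
by rewrite (bigD1 (f t)) //= eqxx big1 // => i; rewrite eq_sym => /negbTE ->.
Qed.

Lemma sum_Cnt p n (A : 'M[int]_n.+1) :
  (\sum_(k : {ffun 'I_n.+1 -> 'I_p.-1.+1} |
       ((\sum_i (k i : nat)) == p.-1)%N && goodb p A (fun i => k i))
     Cnt p.-1 (fun i => k i))%N =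
  #|[pred f : {ffun 'I_p.-1 -> 'I_n.+1} | goodb p A (cnt f)]|.
Proof.
have hv (f : {ffun 'I_p.-1 -> 'I_n.+1}) i :
    ([ffun i => (inord (cnt f i) : 'I_p.-1.+1)] i : nat) = cnt f i.
  by rewrite ffunE inordK // ltnS cnt_le.
rewrite -sum1_card.
rewrite (partition_big (fun f : {ffun 'I_p.-1 -> 'I_n.+1} =>
      [ffun i => (inord (cnt f i) : 'I_p.-1.+1)])
    (fun k : {ffun 'I_n.+1 -> 'I_p.-1.+1} =>
      ((\sum_i (k i : nat)) == p.-1)%N && goodb p A (fun i => k i))) /=; last first.
  move=> f hg; rewrite (eq_bigr (cnt f)) ?cnt_sum ?eqxx /=; last by move=> i _; rewrite hv.
  by rewrite (goodb_ext _ _ (hv f)).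
apply: eq_bigr => k /andP[hs hg]; rewrite /Cnt -sum1_card; apply: eq_bigl => f.
rewrite !inE; apply/forallP/andP => [h|[_ /eqP <-] i]; last by rewrite hv.
have e : cnt f =1 (fun i => k i) by move=> i; apply/eqP.
split; first by rewrite (goodb_ext _ _ e).
by apply/eqP/ffunP => i; apply: val_inj; rewrite /= hv e.
Qed.

Lemma nu_hk p n (pP : prime p) (k : 'I_n.+1 -> nat) :
  (\sum_i k i)%N = p.-1 -> nu_xi p (hk p k) = (Cnt p.-1 k)%:R.
Proof.
move=> hs.
have p1 : (0 < p.-1)%N by rewrite -ltnS prednK ?prime_gt1 ?prime_gt0.
have m0 : (p.-1)%:R != 0 :> rat by rewrite pnatr_eq0 -lt0n.
rewrite /nu_xi; under eq_bigr do rewrite mxE mulrCA divff // mulr1 natrK.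
rewrite -(Cnt_fact hs) natrM -natr_prod mulfK // pnatr_eq0 -lt0n.
by rewrite prodn_gt0 // => i; rewrite fact_gt0.
Qed.

Unset Implicit Arguments. Set Strict Implicit.

Theorem proposition3p1 (n : nat) (A : 'M[int]_n.+1) (p : nat) :
  (forall i j, 0 <= A i j) ->
  invertible_poly A ->
  prime p ->
  (\det A %| (p.-1)%:Z)%Z ->
  exists k : int,
    (nu_A p A)%:R - (-1) ^+ n *
      (\sum_(xi \in [set xi | Xi A xi /\ age xi = 1 /\
                              forall i, 0 <= xi i 0]%classic) nu_xi p xi)
    = (p%:Z * k)%:~R :> rat.
Proof.
move=> hA [dA _] pP hd.
have p1 : (0 < p.-1)%N by rewrite -ltnS prednK ?prime_gt1 ?prime_gt0.
set G := #|[pred f : {ffun 'I_p.-1 -> 'I_n.+1} | goodb p A (cnt f)]|.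
have hS : \sum_(xi \in [set xi | Xi A xi /\ age xi = 1 /\
                              forall i, 0 <= xi i 0]%classic) nu_xi p xi = G%:R.
  rewrite (Xi_set hA dA pP hd) fsbig_image; last first.
    move=> k1 k2 _ _ /matrixP e; apply/ffunP => i; apply: val_inj.
    have := e i 0; rewrite !mxE => /(mulIf (invr_neq0 _)).
    rewrite pnatr_eq0 -lt0n p1 => /(_ isT) /eqP; rewrite eqr_nat => /eqP.
    done.
  rewrite -(@bigfs _ _ _ _ (enum {ffun 'I_n.+1 -> 'I_p.-1.+1})) ?enum_uniq //; last by move=> k _; rewrite mem_enum.
  rewrite big_enum_cond /= /G -sum_Cnt natr_sum; apply: eq_bigr => k /andP[/eqP hs _].
  exact: nu_hk.
rewrite hS.
have hF := Fp_count A pP; rewrite -/G in hF.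
set N := nu_A p A in hF *.
rewrite -signr_odd in hF; rewrite -signr_odd; case: (odd n) hF => /= hF.
  have e : ((N + G) %% p = 0)%N.
    have : (N + G)%:R = 0 :> 'F_p by rewrite natrD hF mulN1r addNr.
    by move/(congr1 (@nat_of_ord _)); rewrite (val_Fp_nat pP).
  exists ((N + G) %/ p)%:Z.
  have h : (N%:Z + G%:Z = p%:Z * ((N + G) %/ p)%:Z)%R.
    by have := divn_eq (N + G) p; rewrite e; lia.
  by rewrite -h rmorphD /= mulN1r opprK.
have e : (N %% p = G %% p)%N.
  by move: hF; rewrite mul1r => /(congr1 (@nat_of_ord _)); rewrite !(val_Fp_nat pP).
exists ((N %/ p)%:Z - (G %/ p)%:Z).
have h : (N%:Z - G%:Z = p%:Z * ((N %/ p)%:Z - (G %/ p)%:Z))%R.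
  by have := divn_eq N p; have := divn_eq G p; rewrite e; lia.
by rewrite -h rmorphB /= mul1r.
Qed.
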